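(* Let $\mathbb{G}$ be a unicellular fatgraph and let $C_1\neq C_2$ be two of its components. Then the traces $I_{C_1}$ and $I_{C_2}$ are either subsequent (every sector of one trace is $\le_\gamma$ every sector of the other) or nested (one trace is contained in a gap of the other component).
   Context: A (rooted) unicellular fatgraph with $n$ ribbons: sectors $[2n+1]$, vertices the cycles of a permutation $\sigma$, boundary $\gamma=(1,2,\dots,2n+1)$ (a single cycle), orientations $\omega$ of sectors; the pairs $(x,\sigma(x))$, $x\neq 2n+1$, are matched into ribbons $((x,\sigma(x)),(y,\sigma(y)))$, each ribbon thus having four sectors. $<_\gamma$ denotes the order $1<2<\dots<2n+1$ and $[s,t]_\gamma=\{u: s\le_\gamma u\le_\gamma t\}$. For a ribbon $r$, $r^L$ and $r^R$ are the $<_\gamma$-min and max of its sectors. Ribbons $r_1,r_2$ cross if $r_1^L<_\gamma r_2^L<_\gamma r_1^R<_\gamma r_2^R$ or $r_2^L<_\gamma r_1^L<_\gamma r_2^R<_\gamma r_1^R$. A component is an equivalence class of the equivalence relation on ribbons generated by crossing. The trace $I_C$ of a component $C$ is the set of sectors of its ribbons; write it as a disjoint union of maximal $\gamma$-intervals $[a_1,c_1]_\gamma\cup\dots\cup[a_l,c_l]_\gamma$ with $a_1<_\gamma\dots<_\gamma a_l$; the intervals $[c_i,a_{i+1}]_\gamma$, $1\le i<l$, are the gaps of $C$. *)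

(* Defs.v *)
(* Sectors [2n+1] are encoded as the ordinals 'I_(2n+1) = {0,...,2n}
   (sector k of the paper is the ordinal k-1); the boundary
   gamma = (1,2,...,2n+1) becomes i |-> i+1, and <_gamma is the order
   of nat on the values.  The last sector (paper: 2n+1) is [root n]. *)
From mathcomp Require Import all_boot all_fingroup.
Set Implicit Arguments.
Unset Strict Implicit.
Unset Printing Implicit Defensive.

Notation sector n := 'I_(n.*2.+1).

Definition root (n : nat) : sector n := ord_max.

Definition gsucc (n : nat) (s : sector n) : sector n := inord s.+1.

(* a half-edge is a pair (x, sigma x) with x <> 2n+1; we identify it with x.
   [mate] matches the 2n half-edges into n ribbons (a fixed-point-free
   involution on the non-root sectors). *)
Definition is_matching (n : nat) (mate : sector n -> sector n) : Prop :=
  forall x : sector n, x != root n ->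
    [/\ mate x != root n, mate x != x & mate (mate x) = x].

Definition ribbons (n : nat) (mate : sector n -> sector n) : {set {set (sector n)}} :=
  [set [set x; mate x] | x in [set x : sector n | x != root n]].

Definition rsectors (n : nat) (sigma : {perm (sector n)}) (r : {set (sector n)})
  : {set (sector n)} := \bigcup_(x in r) [set x; sigma x].

(* the two sides of the ribbon with half-edges x and y = mate x; the boolean
   [tw] (determined by the orientations omega) selects how the two ends of the
   ribbon are glued: sides {x, sigma y}, {sigma x, y}  or  {x, y}, {sigma x, sigma y}. *)
Definition side1 (n : nat) (sigma : {perm (sector n)}) (mate : sector n -> sector n)
  (tw : {set (sector n)} -> bool) (x : sector n) : {set (sector n)} :=
  if tw [set x; mate x] then [set x; mate x] else [set x; sigma (mate x)].
Definition side2 (n : nat) (sigma : {perm (sector n)}) (mate : sector n -> sector n)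
  (tw : {set (sector n)} -> bool) (x : sector n) : {set (sector n)} :=
  if tw [set x; mate x] then [set sigma x; sigma (mate x)] else [set sigma x; mate x].

Definition gstep (n : nat) (s : sector n) : {set (sector n)} := [set s; gsucc s].

Definition is_gstep (n : nat) (p : {set (sector n)}) : Prop :=
  exists2 s : sector n, s != root n & p = gstep s.

(* the boundary of the fatgraph is the single cycle gamma = (1 ... 2n+1):
   every ribbon side is a boundary step s -> s+1, and every boundary step
   s -> s+1 (s <> 2n+1) runs along a side of some ribbon; the step
   2n+1 -> 1 passes the root. *)
Definition boundary_is_gamma (n : nat) (sigma : {perm (sector n)})
  (mate : sector n -> sector n) (tw : {set (sector n)} -> bool) : Prop :=
  (forall x : sector n, x != root n ->
      is_gstep (side1 sigma mate tw x) /\ is_gstep (side2 sigma mate tw x)) /\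
  (forall s : sector n, s != root n ->
      exists2 x : sector n, x != root n &
        gstep s = side1 sigma mate tw x \/ gstep s = side2 sigma mate tw x).

Definition unicellular_fatgraph (n : nat) (sigma : {perm (sector n)})
  (mate : sector n -> sector n) (tw : {set (sector n)} -> bool) : Prop :=
  is_matching mate /\ boundary_is_gamma sigma mate tw.

Definition rL (n : nat) (sigma : {perm (sector n)}) (r : {set (sector n)}) : nat :=
  \big[minn/n.*2]_(s in rsectors sigma r) (val s).
Definition rR (n : nat) (sigma : {perm (sector n)}) (r : {set (sector n)}) : nat :=
  \max_(s in rsectors sigma r) (val s).

Definition cross (n : nat) (sigma : {perm (sector n)}) (r1 r2 : {set (sector n)}) : bool :=
  [&& rL sigma r1 < rL sigma r2, rL sigma r2 < rR sigma r1 & rR sigma r1 < rR sigma r2]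
  || [&& rL sigma r2 < rL sigma r1, rL sigma r1 < rR sigma r2 & rR sigma r2 < rR sigma r1].

Definition crossrel (n : nat) (sigma : {perm (sector n)}) (mate : sector n -> sector n)
  : rel {set (sector n)} :=
  fun r1 r2 => [&& r1 \in ribbons mate, r2 \in ribbons mate & cross sigma r1 r2].

(* components: equivalence classes of the equivalence relation on ribbons
   generated by crossing (connect = reflexive-transitive closure of the
   symmetric relation crossrel) *)
Definition is_component (n : nat) (sigma : {perm (sector n)}) (mate : sector n -> sector n)
  (C : {set {set (sector n)}}) : Prop :=
  exists2 r, r \in ribbons mate &
    C = [set r' in ribbons mate | connect (crossrel sigma mate) r r'].

Definition trace (n : nat) (sigma : {perm (sector n)}) (C : {set {set (sector n)}})
  : {set (sector n)} := \bigcup_(r in C) rsectors sigma r.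

Definition ginterval (n : nat) (s t : nat) : {set (sector n)} :=
  [set u : sector n | s <= u <= t].

Definition max_interval (n : nat) (I : {set (sector n)}) (a c : nat) : Prop :=
  [/\ a <= c, ginterval n a c \subset I,
      (forall u : sector n, u.+1 = a -> u \notin I)
    & (forall u : sector n, val u = c.+1 -> u \notin I)].

(* [c,a']_gamma is a gap of C: c is the end of a maximal interval [a,c] of I_C,
   a' is the start of the next maximal interval [a',c'] (w.r.t. the order of
   the starting points) *)
Definition is_gap (n : nat) (sigma : {perm (sector n)}) (C : {set {set (sector n)}})
  (c a' : nat) : Prop :=
  exists a c',
    [/\ max_interval (trace sigma C) a c, max_interval (trace sigma C) a' c', a < a'
      & forall b d, max_interval (trace sigma C) b d -> ~ (a < b /\ b < a')].

(* Main.v *)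
Require Import Defs.
From mathcomp Require Import all_boot all_fingroup.
From mathcomp Require Import zify.
Import Defs.
Set Implicit Arguments.
Unset Strict Implicit.
Unset Printing Implicit Defensive.


Definition crossn (L1 R1 L2 R2 : nat) : bool :=
  [&& L1 < L2, L2 < R1 & R1 < R2] || [&& L2 < L1, L1 < R2 & R2 < R1].

Definition sepn (Lx Rx Ly Ry : nat) : bool :=
  [&& Lx < Rx, Ly < Ry, Lx != Ly, Rx != Ry & ~~ crossn Lx Rx Ly Ry].

Lemma sepn_sym a b c d : sepn a b c d = sepn c d a b.
Proof. rewrite /sepn /crossn; apply/idP/idP; lia. Qed.

Lemma inside_inv Lx Rx Ly Ry Ly' Ry' :
  sepn Lx Rx Ly Ry -> sepn Lx Rx Ly' Ry' -> crossn Ly Ry Ly' Ry' ->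
  (Lx < Ly) && (Ry < Rx) = (Lx < Ly') && (Ry' < Rx).
Proof. rewrite /sepn /crossn => *. apply/idP/idP; lia. Qed.

Lemma left_inv Lx Rx Ly Ry Ly' Ry' :
  sepn Lx Rx Ly Ry -> sepn Lx Rx Ly' Ry' -> crossn Ly Ry Ly' Ry' ->
  ~~ ((Ly < Lx) && (Rx < Ry)) -> ~~ ((Ly' < Lx) && (Rx < Ry')) ->
  ~~ ((Lx < Ly) && (Ry < Rx)) -> ~~ ((Lx < Ly') && (Ry' < Rx)) ->
  (Ry <= Lx) = (Ry' <= Lx).
Proof. rewrite /sepn /crossn => *. apply/idP/idP; lia. Qed.

Lemma class_inv (T : finType) (e : rel T) (f : T -> bool) r z :
  (forall x y, connect e r x -> e x y -> f x = f y) -> connect e r z -> f z = f r.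
Proof.
move=> H /connectP [s pth ->].
suff: forall x, path e x s -> connect e r x -> f (last x s) = f x.
  by move/(_ r pth (connect0 _ _)).
elim: s {pth} => //= y s IH x /andP [exy pys] crx.
have cry : connect e r y by apply: connect_trans crx (connect1 exy).
by rewrite (IH y pys cry) (H x y crx exy).
Qed.

Lemma bigmin_le (I : eqType) (r : seq I) (P : pred I) (F : I -> nat) k i :
  i \in r -> P i -> \big[minn/k]_(j <- r | P j) F j <= F i.
Proof.
elim: r => //= a r IH; rewrite inE big_cons => /orP [/eqP-> Pi | ir Pi].
  by rewrite Pi geq_minl.
case: ifP => _; last exact: IH.
by rewrite geq_min (IH ir Pi) orbT.
Qed.

Lemma bigmin_eq n (S : {set sector n}) m :
  (exists2 s, s \in S & val s = m) -> (forall s, s \in S -> m <= val s) ->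
  \big[minn/n.*2]_(s in S) val s = m.
Proof.
case=> s0 s0S <- H; apply/eqP; rewrite eqn_leq; apply/andP; split.
  by apply: bigmin_le; rewrite ?mem_index_enum.
apply: (big_ind (fun v => val s0 <= v)) => //.
  by have := ltn_ord s0; rewrite ltnS.
by move=> x y; rewrite leq_min => -> ->.
Qed.

Lemma bigmax_eq n (S : {set sector n}) m :
  (exists2 s, s \in S & val s = m) -> (forall s, s \in S -> val s <= m) ->
  \max_(s in S) val s = m.
Proof.
case=> s0 s0S <- H; apply/eqP; rewrite eqn_leq; apply/andP; split.
  by apply/bigmax_leqP => i iS; apply: H.
by apply: leq_bigmax_cond.
Qed.


Lemma crossrel_sym n (sigma : {perm (sector n)}) mate : symmetric (crossrel sigma mate).
Proof.
move=> x y. rewrite /crossrel /cross. by rewrite andbCA [_ || _]orbC.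
Qed.

Lemma comp_facts n (sigma : {perm (sector n)}) mate C1 C2 :
  is_component sigma mate C1 -> is_component sigma mate C2 -> C1 != C2 ->
  forall q p, q \in C1 -> p \in C2 -> (q != p) && ~~ cross sigma q p.
Proof.
case=> r1 r1R ->; case=> r2 r2R -> neq q p.
rewrite !inE => /andP [qR c1q] /andP [pR c2p].
apply: contraNT neq => /nandP H.
have c1p : connect (crossrel sigma mate) r1 p.
  case: H => [/negPn/eqP <- // | /negPn cqp].
  by apply: connect_trans c1q (connect1 _); rewrite /crossrel qR pR.
have csym := sym_connect_sym (@crossrel_sym n sigma mate).
apply/eqP/setP => z; rewrite !inE.
have -> : connect (crossrel sigma mate) r1 z = connect (crossrel sigma mate) p z.
  apply/idP/idP => H1; first by apply: connect_trans H1; rewrite csym.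
  exact: connect_trans c1p H1.
have -> : connect (crossrel sigma mate) r2 z = connect (crossrel sigma mate) p z.
  apply/idP/idP => H1; first by apply: connect_trans H1; rewrite csym.
  exact: connect_trans c2p H1.
by [].
Qed.

Lemma comp_ribbon n (sigma : {perm (sector n)}) mate C q :
  is_component sigma mate C -> q \in C -> q \in ribbons mate.
Proof. by case=> r _ ->; rewrite inE => /andP []. Qed.

Lemma comp_inv n (sigma : {perm (sector n)}) mate C (f : {set sector n} -> bool) :
  is_component sigma mate C ->
  (forall x y, x \in C -> y \in C -> cross sigma x y -> f x = f y) ->
  forall x y, x \in C -> y \in C -> f x = f y.
Proof.
case=> r rR -> H x y.
have key : forall z, z \in [set r' in ribbons mate | connect (crossrel sigma mate) r r'] -> f z = f r.
  move=> z; rewrite inE => /andP [_ cz]; apply: class_inv cz => a b ca.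
  rewrite /crossrel => /and3P [aR bR cab]; apply: H => //; rewrite inE ?aR ?bR //.
  by apply: connect_trans ca (connect1 _); rewrite /crossrel aR bR.
by move=> /key -> /key ->.
Qed.

Definition geom n (sigma : {perm (sector n)}) (mate : sector n -> sector n) : Prop :=
  forall r, r \in ribbons mate ->
  [/\ rL sigma r + 2 <= rR sigma r,
      (forall u : sector n, u \in rsectors sigma r ->
         [|| nat_of_ord u == rL sigma r, nat_of_ord u == (rL sigma r).+1,
             (nat_of_ord u).+1 == rR sigma r | nat_of_ord u == rR sigma r]) &
      exists2 u, u \in rsectors sigma r & nat_of_ord u = rL sigma r].

Definition distLR n (sigma : {perm (sector n)}) (mate : sector n -> sector n) : Prop :=
  forall r r', r \in ribbons mate -> r' \in ribbons mate -> r != r' ->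
    (rL sigma r != rL sigma r') && (rR sigma r != rR sigma r').

Lemma geom_bounds n (sigma : {perm (sector n)}) mate r (u : sector n) :
  geom sigma mate -> r \in ribbons mate -> u \in rsectors sigma r ->
  rL sigma r <= u <= rR sigma r.
Proof. move=> G rR ur; have [G1 G2 _] := G r rR; have := G2 u ur; lia. Qed.

Lemma main_half n (sigma : {perm (sector n)}) mate C1 C2 q0 p0 p1 :
  geom sigma mate -> distLR sigma mate ->
  is_component sigma mate C1 -> is_component sigma mate C2 -> C1 != C2 ->
  q0 \in C1 -> p0 \in C2 -> p1 \in C2 -> rL sigma q0 < rL sigma p0 ->
  (forall p, p \in C2 -> rL sigma p0 <= rL sigma p) ->
  (forall p, p \in C2 -> rR sigma p <= rR sigma p1) ->
  (forall u v : sector n, u \in trace sigma C1 -> v \in trace sigma C2 -> u <= v) \/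
  (exists c a, is_gap sigma C1 c a /\ trace sigma C2 \subset ginterval n c a).
Proof.
move=> G D HC1 HC2 neq q0C p0C p1C lt0 minp0 maxp1.
set a2 := rL sigma p0; set b2 := rR sigma p1.
have F := comp_facts HC1 HC2 neq.
have R1 q : q \in C1 -> q \in ribbons mate := comp_ribbon HC1.
have R2 p : p \in C2 -> p \in ribbons mate := comp_ribbon HC2.
have pairF : forall q p, q \in C1 -> p \in C2 ->
    sepn (rL sigma q) (rR sigma q) (rL sigma p) (rR sigma p).
  move=> q p qC pC; have /andP [qp ncr] := F q p qC pC.
  have [Gq _ _] := G q (R1 q qC); have [Gp _ _] := G p (R2 p pC).
  have /andP [d1 d2] := D q p (R1 q qC) (R2 p pC) qp.
  rewrite /sepn d1 d2 ncr !andbT; apply/andP; split; lia.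
have HI2 : forall v : sector n, v \in trace sigma C2 -> a2 <= v <= b2.
  move=> v /bigcupP [p pC vp]; have := geom_bounds G (R2 p pC) vp.
  have := minp0 p pC; have := maxp1 p pC; rewrite /a2 /b2; lia.
have Hnoin : forall q p, q \in C1 -> p \in C2 ->
    ~~ ((rL sigma p < rL sigma q) && (rR sigma q < rR sigma p)).
  move=> q p qC pC.
  have E := comp_inv HC1
    (f := fun q => (rL sigma p < rL sigma q) && (rR sigma q < rR sigma p)) _ qC q0C.
  rewrite E /=; last first.
    move=> x y xC yC cxy /=; apply: inside_inv => //; rewrite sepn_sym; exact: pairF.
  have := minp0 p pC; rewrite /a2 in lt0; lia.
have HX : forall u : sector n, u \in trace sigma C1 -> (u <= a2) || (b2 <= u).
  move=> u /bigcupP [q qC uq].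
  have [Gq G2q _] := G q (R1 q qC); have := G2q u uq => hu.
  have gi := comp_inv HC2 (f := fun p => (rL sigma q < rL sigma p) && (rR sigma p < rR sigma q)).
  have gi' : forall x y, x \in C2 -> y \in C2 -> cross sigma x y ->
      (rL sigma q < rL sigma x) && (rR sigma x < rR sigma q) =
      (rL sigma q < rL sigma y) && (rR sigma y < rR sigma q).
    by move=> x y xC yC cxy; apply: inside_inv => //; apply: pairF.
  have s0 := pairF q p0 qC p0C; have s1 := pairF q p1 qC p1C.
  have n0 := Hnoin q p0 qC p0C; have n1 := Hnoin q p1 qC p1C.
  have e01 := gi gi' p0 p1 p0C p1C; simpl in e01.
  case: (boolP ((rL sigma q < rL sigma p0) && (rR sigma p0 < rR sigma q))) => ins.
    move: (ins); rewrite e01 => ins1; move: ins ins1 hu Gq; rewrite /a2 /b2; lia.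
  have hl' : forall x y, x \in C2 -> y \in C2 -> cross sigma x y ->
      (rR sigma x <= rL sigma q) = (rR sigma y <= rL sigma q).
    move=> x y xC yC cxy; apply: left_inv => //; try exact: pairF.
    - exact: cxy.
    - exact: Hnoin.
    - exact: Hnoin.
    - by rewrite (gi gi' x p0 xC p0C).
    - by rewrite (gi gi' y p0 yC p0C).
  have e := comp_inv HC2 (f := fun p => rR sigma p <= rL sigma q) hl' p0C p1C.
  simpl in e.
  move: e s0 s1 n0 n1 ins hu Gq; rewrite e01 /a2 /b2 /sepn /crossn; lia.
have [Gp0 _ _] := G p0 (R2 p0 p0C).
have ab2 : a2 + 2 <= b2 by have := maxp1 p0 p0C; rewrite /a2 /b2 in Gp0 *; lia.
set I1 := trace sigma C1.
case: (boolP [forall u : sector n, (u \in I1) ==> (u <= a2)]) => [/forallP Hall | ].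
  left=> u v uI vI; have := implyP (Hall u) uI; have := HI2 v vI; lia.
case/forallPn => u0; rewrite negb_imply -ltnNge => /andP [u0I u0gt].
have u0b : b2 <= u0 by have := HX u0 u0I; lia.
right.
have [_ _ [w0 w0q w0v]] := G q0 (R1 q0 q0C).
have w0I : w0 \in I1 by apply/bigcupP; exists q0.
have w0a : w0 <= a2 by rewrite w0v; apply: ltnW.
case: (@arg_maxnP _ w0 (fun u => (u \in I1) && (u <= a2)) val); first by rewrite w0I w0a.
move=> c /andP [cI ca2] cmax.
case: (@arg_minnP _ u0 (fun u => (u \in I1) && (b2 <= u)) val); first by rewrite u0I u0b.
move=> a' /andP [a'I a'b] a'min.
have cmax' : forall u : sector n, u \in I1 -> u <= a2 -> u <= c.
  by move=> u uI ua; apply: (cmax u); rewrite uI ua.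
have a'min' : forall u : sector n, u \in I1 -> b2 <= u -> a' <= u.
  by move=> u uI ua; apply: (a'min u); rewrite uI ua.
exists (nat_of_ord c), (nat_of_ord a'); split; last first.
  apply/subsetP => v vI; rewrite inE; have := HI2 v vI; lia.
pose Pa b := [forall w : sector n, (b <= w <= c) ==> (w \in I1)].
have exA : exists b, Pa b.
  exists (nat_of_ord c); apply/forallP => w; apply/implyP => hw.
  have -> : w = c by apply: val_inj; apply/eqP; rewrite eqn_leq andbC.
  exact: cI.
case: (ex_minnP exA) => a Pa_a amin.
pose Pc d := (d <= n.*2) && [forall w : sector n, (a' <= w <= d) ==> (w \in I1)].
have Pca' : Pc a'.
  rewrite /Pc -ltnS ltn_ord /=; apply/forallP => w; apply/implyP => hw.
  have -> : w = a' by apply: val_inj; apply/eqP; rewrite eqn_leq andbC.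
  exact: a'I.
have exC : exists d, Pc d by exists (nat_of_ord a').
have bndC : forall d, Pc d -> d <= n.*2 by move=> d /andP [].
case: (ex_maxnP exC bndC) => c' /andP [c'le Pc_c'] c'max.
have ac : a <= c.
  apply: amin; apply/forallP => w; apply/implyP => hw.
  have -> : w = c by apply: val_inj; apply/eqP; rewrite eqn_leq andbC.
  exact: cI.
exists a, c'; split.
- split => //.
  + by apply/subsetP => w; rewrite inE => hw; apply: (implyP (forallP Pa_a w)).
  + move=> u ua; apply/negP => uI.
    have : Pa u.
      apply/forallP => w; apply/implyP => hw.
      case: (boolP (nat_of_ord w == u)) => [/eqP wu | wu].
        by have -> : w = u by apply: val_inj.
      by apply: (implyP (forallP Pa_a w)); clear -hw wu ua; lia.
    move/amin => h; clear -h ua; lia.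
  + move=> u uc; rewrite -[val u]/(nat_of_ord u) in uc; apply/negP => uI; have h1 := HX u uI; have h2 := cmax' u uI.
    clear -h1 h2 uc ab2 ca2; lia.
- split.
  + exact: c'max Pca'.
  + by apply/subsetP => w; rewrite inE => hw; apply: (implyP (forallP Pc_c' w)).
  + move=> u ua; apply/negP => uI; have h1 := HX u uI; have h2 := a'min' u uI.
    clear -h1 h2 ua ab2 a'b; lia.
  + move=> u uc; rewrite -[val u]/(nat_of_ord u) in uc; apply/negP => uI.
    have : Pc u.
      rewrite /Pc -ltnS ltn_ord /=; apply/forallP => w; apply/implyP => hw.
      case: (boolP (nat_of_ord w == u)) => [/eqP wu | wu].
        by have -> : w = u by apply: val_inj.
      by apply: (implyP (forallP Pc_c' w)); clear -hw wu uc; lia.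
    move/c'max => h; clear -h uc; lia.
- clear -ac ca2 ab2 a'b; lia.
- move=> b d [bd sub noprev _] [ab ba'].
  have bN : b < n.*2.+1 by have h := ltn_ord a'; clear -h ba'; lia.
  have bI : (inord b : sector n) \in I1.
    by apply: (subsetP sub); rewrite inE inordK // leqnn bd.
  have b1N : b.-1 < n.*2.+1 by clear -bN; lia.
  have nb1 := noprev (inord b.-1).
  rewrite inordK // in nb1.
  have {}nb1 : (inord b.-1 : sector n) \notin I1 by apply: nb1; clear -ab; lia.
  case: (leqP b c) => bc.
    move/negP: nb1; apply; apply: (implyP (forallP Pa_a _)); rewrite inordK //.
    clear -ab bc; lia.
  have h1 := HX _ bI; have h2 := cmax' _ bI; have h3 := a'min' _ bI.
  rewrite inordK // in h1 h2 h3; clear -h1 h2 h3 bc ba'; lia.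
Qed.

Lemma comp_nonempty n (sigma : {perm (sector n)}) mate C :
  is_component sigma mate C -> exists r, r \in C.
Proof. by case=> r rR ->; exists r; rewrite inE rR connect0. Qed.

Lemma prop_from_geom n (sigma : {perm (sector n)}) mate
  (C1 C2 : {set {set (sector n)}}) :
  geom sigma mate -> distLR sigma mate ->
  is_component sigma mate C1 -> is_component sigma mate C2 -> C1 != C2 ->
  (forall u v : sector n, u \in trace sigma C1 -> v \in trace sigma C2 -> u <= v) \/
  (forall u v : sector n, u \in trace sigma C1 -> v \in trace sigma C2 -> v <= u) \/
  (exists c a, is_gap sigma C2 c a /\ trace sigma C1 \subset ginterval n c a) \/
  (exists c a, is_gap sigma C1 c a /\ trace sigma C2 \subset ginterval n c a).
Proof.
move=> G D HC1 HC2 neq.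
have [r1 r1C] := comp_nonempty HC1; have [r2 r2C] := comp_nonempty HC2.
case: (@arg_minnP _ r1 (fun q => q \in C1) (rL sigma)) => // q0 q0C q0min.
case: (@arg_minnP _ r2 (fun q => q \in C2) (rL sigma)) => // p0 p0C p0min.
case: (@arg_maxnP _ r1 (fun q => q \in C1) (rR sigma)) => // q1 q1C q1max.
case: (@arg_maxnP _ r2 (fun q => q \in C2) (rR sigma)) => // p1 p1C p1max.
have /andP [qp _] := comp_facts HC1 HC2 neq q0C p0C.
have /andP [dL _] := D q0 p0 (comp_ribbon HC1 q0C) (comp_ribbon HC2 p0C) qp.
case: (ltngtP (rL sigma q0) (rL sigma p0)) => h; last by rewrite h eqxx in dL.
  have [H|H] := main_half G D HC1 HC2 neq q0C p0C p1C h p0min p1max.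
    by left.
  by right; right; right.
rewrite eq_sym in neq.
have [H|H] := main_half G D HC2 HC1 neq p0C q0C q1C h q0min q1max.
  by right; left => u v uI vI; apply: H.
by right; right; left.
Qed.


Lemma nonroot n (x : sector n) : (x != root n) = (nat_of_ord x < n.*2).
Proof.
rewrite -(inj_eq val_inj) /= ltn_neqAle -ltnS ltn_ord andbT.
by [].
Qed.

Lemma val_gsucc n (s : sector n) : s != root n -> nat_of_ord (gsucc s) = s.+1.
Proof. by rewrite nonroot => h; rewrite /gsucc inordK. Qed.

Lemma in_gstep n (s u : sector n) : s != root n ->
  (u \in gstep s) = (nat_of_ord u == s) || (nat_of_ord u == s.+1).
Proof.
move=> sr; rewrite /gstep in_set2 -!(inj_eq val_inj) /=.
by rewrite -[val (gsucc s)]/(nat_of_ord (gsucc s)) val_gsucc.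
Qed.

Lemma gstep_inj n (s s' : sector n) : s != root n -> s' != root n ->
  gstep s = gstep s' -> s = s'.
Proof.
move=> sr s'r e.
have h1 : s \in gstep s' by rewrite -e /gstep in_set2 eqxx.
have h2 : s' \in gstep s by rewrite e /gstep in_set2 eqxx.
rewrite in_gstep // in h1; rewrite in_gstep // in h2.
apply: val_inj => /=; move: h1 h2; clear; lia.
Qed.

Definition phi n (sigma : {perm (sector n)}) mate tw (x : sector n) : {set sector n} :=
  if tw [set x; mate x] && (mate x < x) then side2 sigma mate tw x
  else side1 sigma mate tw x.

Definition NR n : {set sector n} := [set x : sector n | x != root n].

Lemma sides_phi n (sigma : {perm (sector n)}) mate tw x :
  is_matching mate -> x != root n ->
  (side1 sigma mate tw x = phi sigma mate tw x /\
   side2 sigma mate tw x = phi sigma mate tw (mate x)) \/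
  (side1 sigma mate tw x = phi sigma mate tw (mate x) /\
   side2 sigma mate tw x = phi sigma mate tw x).
Proof.
move=> Hm xr; have [yr yx myx] := Hm x xr.
set y := mate x in yr yx myx *.
have Ty : [set y; mate y] = [set x; y] by rewrite myx setUC.
rewrite /phi /side1 /side2 Ty myx -/y.
case: (tw [set x; y]) => /=.
  case: (ltnP y x) => h.
    have -> : (x < y) = false by apply/negbTE; rewrite -leqNgt ltnW.
    by right; rewrite setUC.
  have -> : (x < y) = true.
    by rewrite ltn_neqAle h andbT; apply: contra yx => /eqP e; apply/eqP; apply: val_inj.
  by left; rewrite [[set sigma y; _]]setUC.
by left; split => //; exact: setUC.
Qed.

Lemma phi_inj n (sigma : {perm (sector n)}) mate tw :
  unicellular_fatgraph sigma mate tw ->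
  {in NR n &, injective (phi sigma mate tw)} /\
  (forall x, x \in NR n -> exists2 s, s \in NR n & phi sigma mate tw x = gstep s).
Proof.
rewrite /unicellular_fatgraph /boundary_is_gamma => -[Hm [Hb1 Hb2]].
have step : forall x, x \in NR n -> exists2 s, s \in NR n & phi sigma mate tw x = gstep s.
  move=> x; rewrite inE => xr; have [[s1 s1r e1] [s2 s2r e2]] := Hb1 x xr.
  rewrite /phi; case: ifP => _.
    by exists s2; rewrite ?inE.
  by exists s1; rewrite ?inE.
split=> //.
apply/imset_injP; rewrite eqn_leq leq_imset_card /=.
have -> : #|NR n| = #|[set gstep s | s in NR n]|.
  rewrite card_in_imset // => s s'; rewrite !inE; exact: gstep_inj.
apply: subset_leq_card; apply/subsetP => g /imsetP [s]; rewrite inE => sr ->.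
have [x xr [e|e]] := Hb2 s sr; rewrite e.
  case: (sides_phi sigma tw Hm xr) => [[-> _] | [-> _]].
    by apply/imsetP; exists x; rewrite ?inE.
  by apply/imsetP; exists (mate x); rewrite // inE; have [] := Hm x xr.
case: (sides_phi sigma tw Hm xr) => [[_ ->] | [_ ->]].
  by apply/imsetP; exists (mate x); rewrite // inE; have [] := Hm x xr.
by apply/imsetP; exists x; rewrite ?inE.
Qed.

Definition Aof n (sigma : {perm (sector n)}) mate tw (x : sector n) : sector n :=
  odflt (root n) [pick s in NR n | phi sigma mate tw x == gstep s].

Lemma Aof_spec n (sigma : {perm (sector n)}) mate tw x :
  unicellular_fatgraph sigma mate tw -> x \in NR n ->
  Aof sigma mate tw x \in NR n /\ phi sigma mate tw x = gstep (Aof sigma mate tw x).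
Proof.
move=> HU xr; have [_ st] := phi_inj HU.
rewrite /Aof; case: pickP => [s /andP [sr /eqP e] | none] //=.
have [s sr e] := st x xr.
by have := none s; rewrite sr e eqxx.
Qed.

Lemma Aof_inj n (sigma : {perm (sector n)}) mate tw x x' :
  unicellular_fatgraph sigma mate tw -> x \in NR n -> x' \in NR n ->
  Aof sigma mate tw x = Aof sigma mate tw x' -> x = x'.
Proof.
move=> HU xr x'r e; have [inj _] := phi_inj HU.
apply: inj => //.
by have [_ ->] := Aof_spec HU xr; have [_ ->] := Aof_spec HU x'r; rewrite e.
Qed.

Lemma rsectors_pair n (sigma : {perm (sector n)}) (x y : sector n) :
  rsectors sigma [set x; y] = [set x; sigma x] :|: [set y; sigma y].
Proof. by rewrite /rsectors bigcup_setU !big_set1. Qed.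

Lemma rsectors_ribbon n (sigma : {perm (sector n)}) mate tw x :
  unicellular_fatgraph sigma mate tw -> x \in NR n ->
  rsectors sigma [set x; mate x] =
  gstep (Aof sigma mate tw x) :|: gstep (Aof sigma mate tw (mate x)).
Proof.
move=> HU xr; have Hm := HU.1.
have xr' : x != root n by rewrite inE in xr.
have [yr _ _] := Hm x xr'.
have yr' : mate x \in NR n by rewrite inE.
have [_ <-] := Aof_spec HU xr; have [_ <-] := Aof_spec HU yr'.
have -> : rsectors sigma [set x; mate x] = side1 sigma mate tw x :|: side2 sigma mate tw x.
  rewrite rsectors_pair /side1 /side2; case: (tw _); apply/setP => u; rewrite !inE;
  by case: (u == x); case: (u == sigma x); case: (u == mate x); case: (u == sigma (mate x)).
by case: (sides_phi sigma tw Hm xr') => [[-> ->] | [-> ->]] //; rewrite setUC.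
Qed.

Lemma shape n (sigma : {perm (sector n)}) mate tw x :
  unicellular_fatgraph sigma mate tw -> x \in NR n ->
  let a := nat_of_ord (Aof sigma mate tw x) in
  let b := nat_of_ord (Aof sigma mate tw (mate x)) in
  [/\ (a < n.*2) /\ (b < n.*2), a != b,
      (forall u : sector n, u \in rsectors sigma [set x; mate x] =
          [|| nat_of_ord u == a, nat_of_ord u == a.+1, nat_of_ord u == b | nat_of_ord u == b.+1]),
      rL sigma [set x; mate x] = minn a b &
      rR sigma [set x; mate x] = (maxn a b).+1].
Proof.
move=> HU xr a b.
have Hm := HU.1.
have xr' : x != root n by rewrite inE in xr.
have [yr yx _] := Hm x xr'.
have yr' : mate x \in NR n by rewrite inE.
have [ar _] := Aof_spec HU xr; have [br _] := Aof_spec HU yr'.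
have ar' := ar; have br' := br.
rewrite inE nonroot in ar; rewrite inE nonroot in br.
have ab : a != b.
  apply/negP => /eqP e; have := Aof_inj HU xr yr' (val_inj e).
  by move=> e'; rewrite -e' eqxx in yx.
rewrite inE in ar'; rewrite inE in br'.
have mem : forall u : sector n, u \in rsectors sigma [set x; mate x] =
    [|| nat_of_ord u == a, nat_of_ord u == a.+1, nat_of_ord u == b | nat_of_ord u == b.+1].
  by move=> u; rewrite (rsectors_ribbon HU xr) in_setU !in_gstep // -orbA.
split.
- by split.
- exact: ab.
- exact: mem.
- apply: bigmin_eq.
    case: (leqP a b) => h.
      by exists (Aof sigma mate tw x); rewrite ?mem ?eqxx //=; apply/minn_idPl.
    by exists (Aof sigma mate tw (mate x)); rewrite ?mem ?eqxx ?orbT //=; apply/minn_idPr; apply: ltnW.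
  by move=> s; rewrite mem -[val s]/(nat_of_ord s); move: ab; clear; lia.
- apply: bigmax_eq.
    case: (leqP a b) => h.
      exists (gsucc (Aof sigma mate tw (mate x))).
        by rewrite mem val_gsucc // eqxx !orbT.
      by rewrite -[val _]/(nat_of_ord _) val_gsucc // (maxn_idPr h).
    exists (gsucc (Aof sigma mate tw x)).
      by rewrite mem val_gsucc // eqxx !orbT.
    by rewrite -[val _]/(nat_of_ord _) val_gsucc // (maxn_idPl (ltnW h)).
  by move=> s; rewrite mem -[val s]/(nat_of_ord s); move: ab; clear; lia.
Qed.

Lemma ribbon_rep n (mate : sector n -> sector n) r :
  r \in ribbons mate -> exists2 x, x \in NR n & r = [set x; mate x].
Proof. by case/imsetP => x xr ->; exists x. Qed.

Lemma geom_of n (sigma : {perm (sector n)}) mate tw :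
  unicellular_fatgraph sigma mate tw -> geom sigma mate.
Proof.
move=> HU r /ribbon_rep [x xr ->].
have [[ar br] ab mem eL eR] := shape HU xr.
rewrite eL eR; split.
- by move: ab; clear; lia.
- by move=> u; rewrite mem; move: ab; clear; lia.
- case: (leqP (Aof sigma mate tw x) (Aof sigma mate tw (mate x))) => h.
    by exists (Aof sigma mate tw x); rewrite ?mem ?eqxx //; move: h; clear; lia.
  by exists (Aof sigma mate tw (mate x)); rewrite ?mem ?eqxx ?orbT //; move: h; clear; lia.
Qed.

Lemma distLR_of n (sigma : {perm (sector n)}) mate tw :
  unicellular_fatgraph sigma mate tw -> distLR sigma mate.
Proof.
move=> HU r r' /ribbon_rep [x xr ->] /ribbon_rep [x' x'r ->] neq.
have Hm := HU.1.
have xr0 : x != root n by rewrite inE in xr.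
have x'r0 : x' != root n by rewrite inE in x'r.
have [yr yx myx] := Hm x xr0; have [y'r y'x' my'x'] := Hm x' x'r0.
have yr1 : mate x \in NR n by rewrite inE.
have y'r1 : mate x' \in NR n by rewrite inE.
have [[ar br] ab _ eL eR] := shape HU xr.
have [[ar' br'] ab' _ eL' eR'] := shape HU x'r.
rewrite eL eR eL' eR'.
have dA : forall z z', z \in NR n -> z' \in NR n -> z != z' ->
    nat_of_ord (Aof sigma mate tw z) != Aof sigma mate tw z'.
  move=> z z' zr z'r; apply: contra => /eqP e; apply/eqP.
  exact: Aof_inj HU zr z'r (val_inj e).
have d1 : x != x'.
  by apply: contra neq => /eqP e; rewrite e.
have d2 : x != mate x'.
  apply: contra neq => /eqP e; rewrite e my'x' setUC.
  by [].
have d3 : mate x != x'.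
  apply: contra neq => /eqP e; rewrite -e myx setUC.
  by [].
have d4 : mate x != mate x'.
  apply: contra d1 => /eqP e; by rewrite -myx e my'x'.
have := dA _ _ xr x'r d1; have := dA _ _ xr y'r1 d2.
have := dA _ _ yr1 x'r d3; have := dA _ _ yr1 y'r1 d4.
move: ab ab'; clear; lia.
Qed.

Theorem proposition3 (n : nat) (sigma : {perm (sector n)})
  (mate : sector n -> sector n) (tw : {set (sector n)} -> bool)
  (C1 C2 : {set {set (sector n)}}) :
  unicellular_fatgraph sigma mate tw ->
  is_component sigma mate C1 -> is_component sigma mate C2 -> C1 != C2 ->
  (* subsequent *)
  (forall u v : sector n, u \in trace sigma C1 -> v \in trace sigma C2 -> u <= v) \/
  (forall u v : sector n, u \in trace sigma C1 -> v \in trace sigma C2 -> v <= u) \/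
  (* nested *)
  (exists c a, is_gap sigma C2 c a /\ trace sigma C1 \subset ginterval n c a) \/
  (exists c a, is_gap sigma C1 c a /\ trace sigma C2 \subset ginterval n c a).
Proof.
move=> HU; apply: prop_from_geom.
  exact: geom_of HU.
exact: distLR_of HU.
Qed.
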